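(* Let $p$ be a prime, $k, r \geq 1$, $G_1, \dots, G_k$ finite-dimensional vector spaces over $\mathbb{F}_p$, $G^{\oplus} = G_1 \oplus \cdots \oplus G_k$ with each $G_i$ regarded as a subspace of $G^{\oplus}$, and $f \colon G^{\oplus} \to \mathbb{D}$. Let $\xi > 0$ and let $\psi \colon (G^{\oplus})^{r-1} \times G_1 \times \cdots \times G_k \to \mathbb{F}_p$ be a multilinear form such that \[\mathbb{E}_{a^{(1)}, \dots, a^{(r-1)} \in G^{\oplus},\ d_1 \in G_1, \dots, d_k \in G_k,\ x \in G^{\oplus}}\ \partial_{a^{(1)}} \cdots \partial_{a^{(r-1)}} \partial_{d_1} \cdots \partial_{d_k} f(x)\, \omega^{\psi(a^{(1)}, \dots, a^{(r-1)}, d_1, \dots, d_k)} \geq \xi,\] where $d_i \in G_i$ is viewed in $G^{\oplus}$. Let $i < j$ be elements of $[r-1]$ and define the multilinear form $\psi_{ij} \colon (G^{\oplus})^{r-1} \times G_1 \times \cdots \times G_k \to \mathbb{F}_p$ by $\psi_{ij}(a^{(1)}, \dots, a^{(r-1)}, d_1, \dots, d_k) = \psi(a^{(1)}, \dots, a^{(r-1)}, d_1, \dots, d_k) - \psi(\tilde a^{(1)}, \dots, \tilde a^{(r-1)}, d_1, \dots, d_k)$, where $(\tilde a^{(1)}, \dots, \tilde a^{(r-1)})$ is obtained from $(a^{(1)}, \dots, a^{(r-1)})$ by swapping $a^{(i)}$ and $a^{(j)}$. Then $\operatorname{bias} \psi_{ij} \geq \xi^8$.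
   Context: $\mathbb{D} = \{z \in \mathbb{C} : |z| \leq 1\}$, $\omega = e^{2\pi i/p}$, $\mathbb{E}$ is the uniform average, $\partial_u f(x) = f(x+u)\overline{f(x)}$. For a multilinear form $\alpha$ on a product $V_1 \times \cdots \times V_s$ of $\mathbb{F}_p$-vector spaces, $\operatorname{bias}\alpha = \mathbb{E}_{v_1 \in V_1, \dots, v_s \in V_s} \omega^{\alpha(v_1, \dots, v_s)}$. *)

(* Defs.v *)
From mathcomp Require Import all_boot all_algebra all_fingroup.
From mathcomp Require Import complex.
From mathcomp Require Import reals trigo.
Set Implicit Arguments.
Unset Strict Implicit.
Unset Printing Implicit Defensive.
Import GRing.Theory Num.Theory.
Local Open Scope ring_scope.
Local Open Scope complex_scope.

(* Model: G_i = F_p^(n i) (every finite-dim F_p-space is of this form up to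
   isomorphism); G^(+) = F_p^T with T = {i : 'I_k & 'I_(n i)} the disjoint
   union of the coordinate sets, and G_i is the subspace of G^(+) of vectors
   supported on the i-th block. *)

Notation Gsum p n := ({ffun {i : _ & 'I_(n i)} -> 'F_p}) (only parsing).

Definition Gsub (p k : nat) (n : 'I_k -> nat) (i : 'I_k) : {set Gsum p n} :=
  [set x : Gsum p n | [forall t, (tag t != i) ==> (x t == 0)]].

Definition Dset (p k : nat) (n : 'I_k -> nat) : {set {ffun 'I_k -> Gsum p n}} :=
  [set d : {ffun 'I_k -> Gsum p n} | [forall l, d l \in Gsub p n l]].

Definition omega (R : realType) (p : nat) : R[i] :=
  (cos (2 * pi / p%:R)) +i* (sin (2 * pi / p%:R)).

Definition omega_pow (R : realType) (p : nat) (x : 'F_p) : R[i] :=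
  omega R p ^+ (val x).

Definition mderiv (R : realType) (V : zmodType) (f : V -> R[i]) (u : V) : V -> R[i] :=
  fun x => f (x + u) * (f x)^*.

Definition iter_mderiv (R : realType) (V : zmodType) (f : V -> R[i]) (s : seq V)
  : V -> R[i] := foldr (fun u g => mderiv g u) f s.

Definition scalev (p : nat) (T : finType) (c : 'F_p) (x : {ffun T -> 'F_p})
  : {ffun T -> 'F_p} := [ffun t => c * x t].

Definition upd (I : finType) (V : Type) (a : {ffun I -> V}) (j : I) (x : V)
  : {ffun I -> V} := [ffun m => if m == j then x else a m].

(* psi : (G^(+))^(r-1) x G_1 x ... x G_k -> F_p is multilinear
   (its values outside the domain, i.e. for d not in Dset, are irrelevant) *)
Definition multilinear_form (p k m : nat) (n : 'I_k -> nat)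
  (psi : {ffun 'I_m -> Gsum p n} -> {ffun 'I_k -> Gsum p n} -> 'F_p) : Prop :=
  (forall (j : 'I_m) a d (c : 'F_p) (x y : Gsum p n),
      d \in Dset p n ->
      psi (upd a j (scalev c x + y)) d = c * psi (upd a j x) d + psi (upd a j y) d)
  /\
  (forall (j : 'I_k) a d (c : 'F_p) (x y : Gsum p n),
      d \in Dset p n -> x \in Gsub p n j -> y \in Gsub p n j ->
      psi a (upd d j (scalev c x + y)) = c * psi a (upd d j x) + psi a (upd d j y)).

Definition corr_avg (R : realType) (p k m : nat) (n : 'I_k -> nat)
  (f : Gsum p n -> R[i])
  (psi : {ffun 'I_m -> Gsum p n} -> {ffun 'I_k -> Gsum p n} -> 'F_p) : R[i] :=
  (\sum_(a : {ffun 'I_m -> Gsum p n}) \sum_(d in Dset p n) \sum_(x : Gsum p n)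
      iter_mderiv f (codom a ++ codom d) x * omega_pow R (psi a d))
  / (#|{: {ffun 'I_m -> Gsum p n}}| * #|Dset p n| * #|{: Gsum p n}|)%:R.

Definition bias (R : realType) (p k m : nat) (n : 'I_k -> nat)
  (phi : {ffun 'I_m -> Gsum p n} -> {ffun 'I_k -> Gsum p n} -> 'F_p) : R[i] :=
  (\sum_(a : {ffun 'I_m -> Gsum p n}) \sum_(d in Dset p n) omega_pow R (phi a d))
  / (#|{: {ffun 'I_m -> Gsum p n}}| * #|Dset p n|)%:R.

Definition psi_swap (p k m : nat) (n : 'I_k -> nat)
  (psi : {ffun 'I_m -> Gsum p n} -> {ffun 'I_k -> Gsum p n} -> 'F_p) (i j : 'I_m)
  : {ffun 'I_m -> Gsum p n} -> {ffun 'I_k -> Gsum p n} -> 'F_p :=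
  fun a d => psi a d - psi [ffun l => a (tperm i j l)] d.

(* Main.v *)
From HB Require Import structures.
Require Import Defs.
From mathcomp Require Import all_boot all_order all_algebra all_fingroup.
From mathcomp Require Import complex.
From mathcomp Require Import reals trigo.
From mathcomp Require Import ring.
From mathcomp Require boolp.
Import Order.TTheory GRing.Theory Num.Theory.
Local Open Scope ring_scope.
Local Open Scope complex_scope.

Set Implicit Arguments.
Unset Strict Implicit.
Unset Printing Implicit Defensive.

Section Omega.
Variables (R : realType) (p : nat).
Hypothesis hp : prime p.

Lemma demoivre (t : R) (m : nat) :
  (cos t +i* sin t) ^+ m = cos (m%:R * t) +i* sin (m%:R * t).
Proof.
elim: m => [|m IH].
  by rewrite expr0 mul0r cos0 sin0.
have mulE (a b c d : R) : (a +i* b) * (c +i* d) = (a*c - b*d) +i* (a*d + b*c) by [].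
rewrite exprS IH mulE -[m.+1]addn1 natrD mulrDl mul1r (addrC _ t) cosD sinD.
by congr (_ +i* _); rewrite addrC.
Qed.

Lemma omega_exp (m : nat) :
  omega R p ^+ m = cos (m%:R * (2 * pi / p%:R)) +i* sin (m%:R * (2 * pi / p%:R)).
Proof. exact: demoivre. Qed.

Lemma omega_p : omega R p ^+ p = 1.
Proof.
have p0 : p%:R != 0 :> R by rewrite pnatr_eq0 -lt0n prime_gt0.
rewrite omega_exp.
have -> : p%:R * (2 * pi / p%:R) = pi *+ 2 :> R by rewrite mulrC divfK // mulr_natl.
by rewrite cos2pi sin2pi.
Qed.

Lemma norm_omega : `|omega R p| = 1.
Proof. by rewrite normc_def /omega /= cos2Dsin2 sqrtr1. Qed.

Notation e := (@omega_pow R p).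

Lemma e_add (a b : 'F_p) : e (a + b) = e a * e b.
Proof.
rewrite /omega_pow -exprD.
have -> : val (a + b) = ((val a + val b) %% p)%N by rewrite /=; congr modn; exact: Fp_cast.
rewrite [in RHS](divn_eq (val a + val b)%N p) exprD mulnC exprM omega_p expr1n mul1r //.
Qed.

Lemma e0 : e 0 = 1.
Proof. by rewrite /omega_pow expr0. Qed.

Lemma norm_e a : `|e a| = 1.
Proof. by rewrite /omega_pow normrX norm_omega expr1n. Qed.

Lemma e_opp a : e a * e (- a) = 1.
Proof. by rewrite -e_add addrN e0. Qed.

Lemma conj_e a : (e a)^* = e (- a).
Proof.
have h : e a * (e a)^* = 1 by rewrite -normCK norm_e expr1n.
by rewrite -[LHS]mulr1 -(e_opp a) mulrA (mulrC _ (e a)) h mul1r.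
Qed.

Lemma e_sub a b : e (a - b) = e a * (e b)^*.
Proof. by rewrite e_add; congr (_ * _); symmetry; exact: conj_e. Qed.

End Omega.
Lemma CS (C : numDomainType) (I : finType) (P : pred I) (F : I -> C) :
  (forall i, F i \is Num.real) ->
  (\sum_(i | P i) F i) ^+ 2 <= (\sum_(i | P i) 1) * \sum_(i | P i) F i ^+ 2.
Proof.
move=> Fr.
set n := \sum_(i | P i) (1 : C); set s := \sum_(i | P i) F i; set q := \sum_(i | P i) F i ^+ 2.
have h1 : \sum_(i | P i) \sum_(j | P j) F i ^+ 2 = n * q.
  rewrite /q mulr_sumr; apply: eq_bigr => i _; rewrite /n mulr_suml.
  by apply: eq_bigr => j _; rewrite mul1r.
have h2 : \sum_(i | P i) \sum_(j | P j) F j ^+ 2 = n * q.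
  by rewrite /n /q mulr_suml; apply: eq_bigr => i _; rewrite mul1r.
have h3 : \sum_(i | P i) \sum_(j | P j) (F i * F j) = s * s.
  rewrite /s mulr_suml; apply: eq_bigr => i _; rewrite mulr_sumr //.
have key : \sum_(i | P i) \sum_(j | P j) (F i - F j) ^+ 2 = 2 * (n * q - s ^+ 2).
  transitivity (\sum_(i | P i) \sum_(j | P j) (F i ^+ 2 + F j ^+ 2 - 2 * (F i * F j))).
    by apply: eq_bigr => i _; apply: eq_bigr => j _; ring.
  transitivity (\sum_(i | P i) (\sum_(j | P j) F i ^+ 2 + \sum_(j | P j) F j ^+ 2
                  - 2 * \sum_(j | P j) (F i * F j))).
    by apply: eq_bigr => i _; rewrite sumrB big_split /= mulr_sumr.
  rewrite sumrB big_split /= -mulr_sumr h1 h2 h3; ring.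
have : 0 <= 2 * (n * q - s ^+ 2).
  rewrite -key; apply: sumr_ge0 => i _; apply: sumr_ge0 => j _.
  by rewrite -realEsqr realB.
by rewrite pmulr_rge0 // subr_ge0.
Qed.

Lemma sum_shift (V : finZmodType) (C : nmodType) (F : V -> C) (c : V) :
  \sum_x F (x + c) = \sum_x F x.
Proof. by rewrite [RHS](reindex_inj (addIr c)). Qed.

Lemma sum_subl (V : finZmodType) (C : nmodType) (F : V -> C) (c : V) :
  \sum_x F (c - x) = \sum_x F x.
Proof.
have inj : injective (fun x : V => c - x) by move=> x y /addrI /oppr_inj.
by rewrite [RHS](reindex_inj inj).
Qed.

Lemma foldr_perm (T : eqType) (U : Type) (F : T -> U -> U) (z : U) :
  (forall a b y, F a (F b y) = F b (F a y)) ->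
  forall s t, perm_eq s t -> foldr F z s = foldr F z t.
Proof.
move=> FC.
have remL x t : x \in t -> foldr F z (x :: rem x t) = foldr F z t.
  elim: t => [|y t IH] //= xt.
  case: eqP => [-> //|nxy] /=.
  have xt' : x \in t by move: xt; rewrite in_cons => /orP [/eqP ex|//]; by case: nxy; rewrite ex.
  by rewrite FC -IH.
elim=> [|x s IH] t hst.
  by move: (perm_size hst); case: t hst.
have xt : x \in t by rewrite -(perm_mem hst) mem_head.
rewrite -(remL x t xt) /= (IH (rem x t)) //.
by rewrite -(perm_cons x) (perm_trans hst) // perm_to_rem.
Qed.

Section Mderiv.
Variables (R : realType) (V : zmodType).

Lemma mderiv_norm (g : V -> R[i]) u x :
  (forall y, `|g y| <= 1) -> `|mderiv g u x| <= 1.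
Proof.
move=> hg; rewrite /mderiv normrM norm_conjC.
by apply: mulr_ile1 => //; apply: normr_ge0.
Qed.

Lemma iter_norm (g : V -> R[i]) s x :
  (forall y, `|g y| <= 1) -> `|iter_mderiv g s x| <= 1.
Proof.
move=> hg; elim: s x => [|u s IH] x //=.
exact: mderiv_norm.
Qed.

Lemma mderiv2E (g : V -> R[i]) u v x :
  mderiv (mderiv g v) u x = g (x + u + v) * (g (x + u))^* * (g (x + v))^* * g x.
Proof. by rewrite /mderiv rmorphM /= conjCK; ring. Qed.

Lemma mderivC (g : V -> R[i]) u v :
  mderiv (mderiv g u) v = mderiv (mderiv g v) u.
Proof.
apply: boolp.funext => x; rewrite !mderiv2E.
by rewrite (addrAC x v u); ring.
Qed.

Lemma iter_perm (g : V -> R[i]) s t : perm_eq s t -> iter_mderiv g s = iter_mderiv g t.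
Proof.
apply: foldr_perm => a b y /=; exact: mderivC.
Qed.

End Mderiv.


Unset Implicit Arguments.

Section Core.
Variables (R : realType) (p : nat).
Hypothesis hp : prime p.
Variables (V : finZmodType).
Notation e := (@omega_pow R p).

Lemma char_sum_ge0 (L : V -> 'F_p) :
  (forall a b, L (a + b) = L a + L b) -> 0 <= \sum_z e (L z).
Proof.
move=> LD.
case: (boolP [forall z, e (L z) == 1]) => [/forallP h | /forallPn [z1 hz1]].
  rewrite (eq_bigr (fun _ => 1)); last by move=> z _; apply/eqP.
  by apply: sumr_ge0 => z _; apply: ler01.
have h : \sum_z e (L z) = (\sum_z e (L z)) * e (L z1).
  rewrite -[LHS](sum_shift _ z1) mulr_suml; apply: eq_bigr => z _.
  by rewrite LD (e_add _ hp).
have : (\sum_z e (L z)) * (1 - e (L z1)) = 0 by rewrite mulrBr mulr1 -h subrr.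
move/eqP; rewrite mulf_eq0 subr_eq0 [1 == _]eq_sym (negbTE hz1) orbF => /eqP ->.
exact: lexx.
Qed.

End Core.

Section Core2.
Variables (R : realType) (p : nat).
Hypothesis hp : prime p.
Variables (V : finZmodType) (g : V -> R[i]) (B : V -> V -> 'F_p).
Hypothesis hg : forall x, `|g x| <= 1.
Hypothesis BDl : forall u u' v, B (u + u') v = B u v + B u' v.
Hypothesis BDr : forall u v v', B u (v + v') = B u v + B u v'.
Notation e := (@omega_pow R p).

Lemma B0l v : B 0 v = 0.
Proof. have h := BDl 0 0 v; rewrite addr0 in h. by apply: (addrI (B 0 v)); rewrite -h addr0. Qed.
Lemma B0r v : B v 0 = 0.
Proof. have h := BDr v 0 0; rewrite addr0 in h. by apply: (addrI (B v 0)); rewrite -h addr0. Qed.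
Lemma BNl u v : B (- u) v = - B u v.
Proof. by apply/eqP; rewrite -addr_eq0 -BDl addNr B0l. Qed.
Lemma BNr u v : B u (- v) = - B u v.
Proof. by apply/eqP; rewrite -addr_eq0 -BDr addNr B0r. Qed.
Lemma BBl u u' v : B (u - u') v = B u v - B u' v.
Proof. by rewrite BDl BNl. Qed.
Lemma BBr u v v' : B u (v - v') = B u v - B u v'.
Proof. by rewrite BDr BNr. Qed.

Definition Wf y z := \sum_x g (y + z - x) * g x * e (B (y - x) (z - x)).

Lemma step1 :
  \sum_u \sum_v \sum_x mderiv (mderiv g v) u x * e (B u v)
  = \sum_y \sum_z (g y)^* * (g z)^* * Wf y z.
Proof.
transitivity (\sum_x \sum_u \sum_v mderiv (mderiv g v) u x * e (B u v)).
  under eq_bigr do rewrite exchange_big.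
  by rewrite exchange_big.
transitivity (\sum_x \sum_y \sum_z (g y)^* * (g z)^* *
   (g (y + z - x) * g x * e (B (y - x) (z - x)))).
  apply: eq_bigr => x _.
  rewrite -(sum_shift _ (- x)); apply: eq_bigr => y _.
  rewrite -(sum_shift _ (- x)); apply: eq_bigr => z _.
  rewrite mderiv2E (addrC x (y - x)) subrK (addrC x (z - x)) subrK addrA.
  ring.
rewrite exchange_big; apply: eq_bigr => y _.
rewrite exchange_big; apply: eq_bigr => z _.
by rewrite /Wf mulr_sumr.
Qed.

Lemma step2 :
  `|\sum_u \sum_v \sum_x mderiv (mderiv g v) u x * e (B u v)|
  <= \sum_y \sum_z `|Wf y z|.
Proof.
rewrite step1; apply: le_trans (ler_norm_sum _ _ _) _; apply: ler_sum => y _.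
apply: le_trans (ler_norm_sum _ _ _) _; apply: ler_sum => z _.
rewrite normrM; apply: ler_piMl; first exact: normr_ge0.
rewrite normrM !norm_conjC; apply: mulr_ile1 => //; exact: normr_ge0.
Qed.

Lemma sum_one (T : finType) : \sum_(i : T) (1 : R[i]) = #|T|%:R.
Proof. by rewrite sumr_const. Qed.

Lemma step3 :
  (\sum_y \sum_z `|Wf y z|) ^+ 2 <= #|V|%:R ^+ 2 * \sum_y \sum_z `|Wf y z| ^+ 2.
Proof.
rewrite !(pair_bigA _ (fun y z => `|Wf y z|)) (pair_bigA _ (fun y z => `|Wf y z| ^+ 2)).
apply: le_trans (CS xpredT (fun q => normr_real _)) _.
by rewrite sum_one card_prod natrM expr2.
Qed.

Definition If h := \sum_z e (B z h - B h z).
Definition Tf w x x' := g (w - x) * g x * (g (w - x'))^* * (g x')^* *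
   e (B w x' - B w x + B x x - B x' x').

Lemma step4 :
  \sum_y \sum_z `|Wf y z| ^+ 2 = \sum_w \sum_x \sum_x' Tf w x x' * If (x - x').
Proof.
transitivity (\sum_y \sum_z \sum_x \sum_x'
   g (y + z - x) * g x * (g (y + z - x'))^* * (g x')^* *
   e (B (y - x) (z - x) - B (y - x') (z - x'))).
  apply: eq_bigr => y _; apply: eq_bigr => z _.
  rewrite normCK /Wf rmorph_sum /= mulr_suml; apply: eq_bigr => x _.
  rewrite mulr_sumr; apply: eq_bigr => x' _.
  rewrite !rmorphM /= (e_sub _ hp); ring.
transitivity (\sum_z \sum_w \sum_x \sum_x'
   g (w - z + z - x) * g x * (g (w - z + z - x'))^* * (g x')^* *
   e (B (w - z - x) (z - x) - B (w - z - x') (z - x'))).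
  rewrite exchange_big; apply: eq_bigr => z _.
  by rewrite -(sum_shift _ (- z)).
rewrite exchange_big; apply: eq_bigr => w _.
rewrite exchange_big; apply: eq_bigr => x _.
rewrite exchange_big; apply: eq_bigr => x' _.
rewrite /If mulr_sumr; apply: eq_bigr => z _.
rewrite !subrK /Tf -[RHS]mulrA -(e_add _ hp).
congr (_ * e _); rewrite !BBl !BBr; ring.
Qed.

Lemma If_ge0 h : 0 <= If h.
Proof.
apply: (@char_sum_ge0 R p hp V (fun z => B z h - B h z)) => a b.
rewrite BDl BDr; ring.
Qed.

Lemma normT w x x' : `|Tf w x x'| <= 1.
Proof.
rewrite /Tf !normrM !norm_conjC norm_e mulr1.
apply: mulr_ile1; rewrite ?mulr_ge0 ?normr_ge0 //.
apply: mulr_ile1; rewrite ?mulr_ge0 ?normr_ge0 //.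
apply: mulr_ile1; rewrite ?mulr_ge0 ?normr_ge0 //.
Qed.

Lemma sum_constC (C : R[i]) : \sum_(x : V) C = #|V|%:R * C.
Proof. by rewrite sumr_const mulr_natl. Qed.

Lemma step6 :
  `|\sum_w \sum_x \sum_x' Tf w x x' * If (x - x')|
   <= #|V|%:R ^+ 2 * \sum_h If h.
Proof.
apply: le_trans (ler_norm_sum _ _ _) _.
apply: (@le_trans _ _ (\sum_(w : V) \sum_(x : V) \sum_(x' : V) If (x - x'))).
  apply: ler_sum => w _; apply: le_trans (ler_norm_sum _ _ _) _.
  apply: ler_sum => x _; apply: le_trans (ler_norm_sum _ _ _) _.
  apply: ler_sum => x' _; rewrite normrM (ger0_norm (If_ge0 _)).
  by apply: ler_piMl; [exact: If_ge0 | exact: normT].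
rewrite sum_constC.
under eq_bigr do rewrite (sum_subl If).
by rewrite sum_constC mulrA expr2.
Qed.

Theorem core :
  `|\sum_u \sum_v \sum_x mderiv (mderiv g v) u x * e (B u v)| ^+ 2
   <= #|V|%:R ^+ 4 * \sum_u \sum_v e (B u v - B v u).
Proof.
set S := \sum_u _.
have h1 : `|S| ^+ 2 <= (\sum_y \sum_z `|Wf y z|) ^+ 2.
  rewrite !expr2; apply: ler_pM; rewrite ?normr_ge0 //; exact: step2.
apply: le_trans h1 _; apply: le_trans step3 _.
have -> : (#|V|%:R ^+ 4 : R[i]) = #|V|%:R ^+ 2 * #|V|%:R ^+ 2 by rewrite -exprD.
rewrite -mulrA ler_pM2l; last by rewrite exprn_gt0 // ltr0n; apply/card_gt0P; exists 0.
have -> : \sum_u \sum_v e (B u v - B v u) = \sum_h If h by rewrite /If exchange_big.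
apply: le_trans step6.
rewrite -step4 ger0_norm //.
by apply: sumr_ge0 => y _; apply: sumr_ge0 => z _; apply: exprn_ge0; apply: normr_ge0.
Qed.

End Core2.


Set Implicit Arguments.

HB.instance Definition _ (aT : finType) (rT : finZmodType) := GRing.Zmodule.on {ffun aT -> rT}.

Section Upd.
Variables (R : realType) (m : nat) (V : finZmodType).

Lemma upd_inj (i : 'I_m) (w : V) :
  injective (fun a : {ffun 'I_m -> V} => upd a i (w + a i)).
Proof.
move=> a b /ffunP H; apply/ffunP => l; move: (H l).
rewrite /upd !ffunE; case: eqP => [-> | _] //; exact: addrI.
Qed.

Lemma reparam1 (F : {ffun 'I_m -> V} -> R[i]) (i : 'I_m) :
  \sum_a \sum_u F (upd a i u) = #|V|%:R * \sum_a F a.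
Proof.
transitivity (\sum_a \sum_(w : V) F (upd a i (w + a i))).
  by apply: eq_bigr => a _; rewrite -(sum_shift _ (a i)).
rewrite exchange_big.
transitivity (\sum_(w : V) \sum_a F a).
  by apply: eq_bigr => w _; rewrite [RHS](reindex_inj (upd_inj (i:=i) (w:=w))).
by rewrite sumr_const mulr_natl.
Qed.

Lemma reparam2 (F : {ffun 'I_m -> V} -> R[i]) (i j : 'I_m) :
  \sum_a \sum_u \sum_v F (upd (upd a i u) j v) = #|V|%:R ^+ 2 * \sum_a F a.
Proof.
rewrite (reparam1 (fun b => \sum_v F (upd b j v))) reparam1.
by rewrite mulrA expr2.
Qed.

Lemma upd_comm (T : Type) (a : {ffun 'I_m -> T}) (i j : 'I_m) u v :
  i != j -> upd (upd a i u) j v = upd (upd a j v) i u.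
Proof.
move=> ij; apply/ffunP => l; rewrite /upd !ffunE.
case: (eqVneq l j) => [-> | _]; last by [].
by rewrite eq_sym (negbTE ij).
Qed.

Lemma upd_swap (T : Type) (a : {ffun 'I_m -> T}) (i j : 'I_m) u v :
  i != j ->
  [ffun l => upd (upd a i u) j v (tperm i j l)] = upd (upd a i v) j u.
Proof.
move=> ij; apply/ffunP => l; rewrite /upd !ffunE.
case: (tpermP i j l) => [-> | -> | /eqP li /eqP lj].
- by rewrite (negbTE ij) !eqxx.
- by rewrite (negbTE ij) !eqxx.
- by rewrite (negbTE li) (negbTE lj).
Qed.

Definition restP (i j : 'I_m) := fun l : 'I_m => (l != i) && (l != j).

Lemma codom_perm (T : eqType) (b : {ffun 'I_m -> T}) (i j : 'I_m) :
  i != j ->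
  perm_eq (codom b) (b i :: b j :: map b (filter (restP i j) (enum 'I_m))).
Proof.
move=> ij; rewrite codomE.
have -> : b i :: b j :: map b (filter (restP i j) (enum 'I_m)) =
          map b (i :: j :: filter (restP i j) (enum 'I_m)) by [].
apply: perm_map; apply: uniq_perm.
- exact: enum_uniq.
- rewrite /= filter_uniq ?enum_uniq // andbT !inE mem_filter /restP !negb_or.
  by rewrite ij eqxx /= mem_filter eqxx andbF.
- move=> x; rewrite mem_enum !inE mem_filter mem_enum /restP andbT.
  by case: (x == i); case: (x == j).
Qed.

End Upd.

Section MainSec.
Variables (R : realType) (p k : nat) (n : 'I_k -> nat) (m : nat).
Hypothesis hp : prime p.
Local Notation V := ({ffun {i0 : 'I_k & 'I_(n i0)} -> 'F_p}).
Local Notation A := {ffun 'I_m -> V}.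
Variable f : V -> R[i].
Hypothesis hf : forall x, `|f x| <= 1.
Variable psi : A -> {ffun 'I_k -> V} -> 'F_p.
Hypothesis hpsi : multilinear_form psi.
Variables (i j : 'I_m).
Hypothesis ij : i != j.
Notation e := (@omega_pow R p).

Lemma scalev1 (x : V) : scalev 1 x = x.
Proof. by apply/ffunP => t; rewrite ffunE mul1r. Qed.

Lemma Dset0 : (0 : {ffun 'I_k -> V}) \in Dset p n.
Proof.
rewrite inE; apply/forallP => l; rewrite inE; apply/forallP => t.
by apply/implyP => _; rewrite !ffunE.
Qed.

Definition Xs (a : A) (d : {ffun 'I_k -> V}) := \sum_u \sum_v \sum_x
  iter_mderiv f (codom (upd (upd a i u) j v) ++ codom d) x * e (psi (upd (upd a i u) j v) d).

Lemma Xs_bound a d : d \in Dset p n ->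
  `|Xs a d| ^+ 2 <= #|{: V}|%:R ^+ 4 *
     \sum_u \sum_v e (psi_swap psi i j (upd (upd a i u) j v) d).
Proof.
move=> hd.
set G := iter_mderiv f (map a (filter (restP i j) (enum 'I_m)) ++ codom d).
set Bf := fun u v => psi (upd (upd a i u) j v) d.
have hG : forall x, `|G x| <= 1 by move=> x; apply: iter_norm.
have BDl : forall u u' v, Bf (u + u') v = Bf u v + Bf u' v.
  move=> u u' v; rewrite /Bf !(upd_comm _ _ _ ij).
  by rewrite -{1}(scalev1 u) hpsi.1 // mul1r.
have BDr : forall u v v', Bf u (v + v') = Bf u v + Bf u v'.
  move=> u v v'; rewrite /Bf.
  by rewrite -{1}(scalev1 v) hpsi.1 // mul1r.
have eq1 : Xs a d = \sum_u \sum_v \sum_x mderiv (mderiv G v) u x * e (Bf u v).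
  apply: eq_bigr => u _; apply: eq_bigr => v _; apply: eq_bigr => x _.
  congr (_ * _).
  set b := upd (upd a i u) j v.
  have hb : perm_eq (codom b ++ codom d)
     (u :: v :: (map a (filter (restP i j) (enum 'I_m)) ++ codom d)).
    have -> : u :: v :: (map a (filter (restP i j) (enum 'I_m)) ++ codom d)
      = (b i :: b j :: map b (filter (restP i j) (enum 'I_m))) ++ codom d.
      rewrite /= /b /upd !ffunE eqxx (negbTE ij) eqxx; congr [:: _, _ & _ ++ _].
      apply/eq_in_map => l; rewrite mem_filter /restP => /andP [/andP [li lj] _].
      by rewrite !ffunE (negbTE li) (negbTE lj).
    by rewrite perm_cat2r codom_perm.
  by rewrite (iter_perm _ hb).
rewrite eq1; apply: le_trans (@core R p hp _ G Bf hG BDl BDr) _.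
rewrite le_eqVlt; apply/orP; left; apply/eqP; congr (_ * _).
apply: eq_bigr => u _; apply: eq_bigr => v _.
by rewrite /psi_swap upd_swap.
Qed.

Lemma sq_le (x y : R[i]) : 0 <= x -> x <= y -> x ^+ 2 <= y ^+ 2.
Proof. move=> x0 xy; rewrite !expr2; apply: ler_pM => //. Qed.

Definition Tot := \sum_(a : A) \sum_(d in Dset p n) \sum_(x : V)
  iter_mderiv f (codom a ++ codom d) x * e (psi a d).
Definition Bs := \sum_(a : A) \sum_(d in Dset p n) e (psi_swap psi i j a d).

Lemma fact1 : #|{: V}|%:R ^+ 2 * Tot = \sum_(a : A) \sum_(d in Dset p n) Xs a d.
Proof.
rewrite /Tot exchange_big mulr_sumr [RHS]exchange_big; apply: eq_bigr => d _.
by rewrite -(reparam2 (fun a => \sum_(x : V) iter_mderiv f (codom a ++ codom d) x * e (psi a d)) i j).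
Qed.

Lemma fact3 : \sum_(a : A) \sum_(d in Dset p n)
    \sum_u \sum_v e (psi_swap psi i j (upd (upd a i u) j v) d)
  = #|{: V}|%:R ^+ 2 * Bs.
Proof.
rewrite /Bs exchange_big [in RHS]exchange_big mulr_sumr; apply: eq_bigr => d _.
by rewrite -(reparam2 (fun a => e (psi_swap psi i j a d)) i j).
Qed.

Lemma count_AD : \sum_(a : A) \sum_(d in Dset p n) (1 : R[i]) = (#|{: A}| * #|Dset p n|)%:R.
Proof. by rewrite sumr_const sumr_const -mulrnA mulnC. Qed.

Lemma main_ineq (xi : R) : 0 < xi -> xi%:C <= corr_avg f psi ->
  (xi ^+ 2)%:C <= bias R (psi_swap psi i j).
Proof.
move=> hxi hc.
set NA := #|{: A}|; set ND := #|Dset p n|; set NV := #|{: V}|.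
have NA0 : (0 < NA)%N by apply/card_gt0P; exists 0.
have ND0 : (0 < ND)%N by apply/card_gt0P; exists 0; exact: Dset0.
have NV0 : (0 < NV)%N by apply/card_gt0P; exists 0.
have corrE : corr_avg f psi = Tot / (NA * ND * NV)%:R by [].
have biasE : bias R (psi_swap psi i j) = Bs / (NA * ND)%:R by [].
set K : R[i] := (NA * ND * NV)%:R.
have K0 : 0 < K by rewrite ltr0n !muln_gt0 NA0 ND0 NV0.
have hT : xi%:C * K <= Tot by rewrite -ler_pdivlMr // -corrE.
have x0 : 0 < xi%:C by rewrite ltcR.
have T0 : 0 < Tot by apply: lt_le_trans hT; rewrite mulr_gt0.
set c2 : R[i] := NV%:R ^+ 2.
have c20 : 0 < c2 by rewrite exprn_gt0 // ltr0n.
have h1 : c2 * Tot <= \sum_(a : A) \sum_(d in Dset p n) `|Xs a d|.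
  rewrite fact1 -[X in X <= _]ger0_norm; last by rewrite -fact1 mulr_ge0 // ltW.
  apply: le_trans (ler_norm_sum _ _ _) _; apply: ler_sum => a _; exact: ler_norm_sum.
have h2 : (\sum_(a : A) \sum_(d in Dset p n) `|Xs a d|) ^+ 2 <=
    (NA * ND)%:R * \sum_(a : A) \sum_(d in Dset p n) `|Xs a d| ^+ 2.
  apply: le_trans (CS xpredT (F := fun a => \sum_(d in Dset p n) `|Xs a d|) _) _.
    by move=> a; apply: ger0_real; apply: sumr_ge0 => d _; apply: normr_ge0.
  rewrite sum_one natrM -mulrA ler_pM2l ?ltr0n // mulr_sumr; apply: ler_sum => a _.
  apply: le_trans (CS (fun d => d \in Dset p n) (F := fun d => `|Xs a d|) _) _.
    by move=> d; apply: normr_real.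
  by rewrite sumr_const.
have h3 : \sum_(a : A) \sum_(d in Dset p n) `|Xs a d| ^+ 2 <=
    NV%:R ^+ 4 * \sum_(a : A) \sum_(d in Dset p n)
      \sum_u \sum_v e (psi_swap psi i j (upd (upd a i u) j v) d).
  rewrite mulr_sumr; apply: ler_sum => a _; rewrite mulr_sumr; apply: ler_sum => d hd.
  exact: Xs_bound.
rewrite fact3 in h3.
have BsE : Bs = bias R (psi_swap psi i j) * (NA * ND)%:R.
  by rewrite biasE divfK // pnatr_eq0 -lt0n muln_gt0 NA0 ND0.
have main : (c2 * (xi%:C * K)) ^+ 2 <=
    (NA * ND)%:R * (NV%:R ^+ 4 * (c2 * (bias R (psi_swap psi i j) * (NA * ND)%:R))).
  have s1 : (c2 * (xi%:C * K)) ^+ 2 <= (c2 * Tot) ^+ 2.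
    apply: sq_le; last exact: (ler_wpM2l (ltW c20) hT).
    exact: ltW (mulr_gt0 c20 (mulr_gt0 x0 K0)).
  have s2 : (c2 * Tot) ^+ 2 <= (\sum_(a : A) \sum_(d in Dset p n) `|Xs a d|) ^+ 2.
    by apply: sq_le => //; exact: ltW (mulr_gt0 c20 T0).
  apply: le_trans s1 _; apply: le_trans s2 _.
  apply: le_trans h2 _; rewrite ler_pM2l ?ltr0n ?muln_gt0 ?NA0 ?ND0 //.
  by rewrite -BsE.
set C0 : R[i] := ((NA * ND)%:R) ^+ 2 * NV%:R ^+ 6.
have C00 : 0 < C0 by rewrite mulr_gt0 // exprn_gt0 // ltr0n ?muln_gt0 ?NA0 ?ND0.
have E1 : (c2 * (xi%:C * K)) ^+ 2 = C0 * xi%:C ^+ 2 by rewrite /C0 /c2 /K !natrM; ring.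
have E2 : (NA * ND)%:R * (NV%:R ^+ 4 * (c2 * (bias R (psi_swap psi i j) * (NA * ND)%:R)))
   = C0 * bias R (psi_swap psi i j) by rewrite /C0 /c2 !natrM; ring.
rewrite E1 E2 ler_pM2l // in main.
by rewrite rmorphXn.
Qed.

Lemma bias_norm : `|bias R (psi_swap psi i j)| <= 1.
Proof.
have NA0 : (0 < #|{: A}|)%N by apply/card_gt0P; exists 0.
have ND0 : (0 < #|Dset p n|)%N by apply/card_gt0P; exists 0; exact: Dset0.
have biasE : bias R (psi_swap psi i j) = Bs / (#|{: A}| * #|Dset p n|)%:R by [].
rewrite biasE normrM normfV normr_nat ler_pdivrMr ?ltr0n ?muln_gt0 ?NA0 ?ND0 // mul1r.
rewrite -count_AD; apply: le_trans (ler_norm_sum _ _ _) _; apply: ler_sum => a _.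
apply: le_trans (ler_norm_sum _ _ _) _; apply: ler_sum => d _.
by rewrite norm_e.
Qed.

End MainSec.

Theorem proposition27 (R : realType) (p k r : nat) (n : 'I_k -> nat)
  (hp : prime p) (hk : (1 <= k)%N) (hr : (1 <= r)%N)
  (f : Gsum p n -> R[i]) (hf : forall x, `|f x| <= 1)
  (xi : R) (hxi : 0 < xi)
  (psi : {ffun 'I_r.-1 -> Gsum p n} -> {ffun 'I_k -> Gsum p n} -> 'F_p)
  (hpsi : multilinear_form psi)
  (hcorr : xi%:C <= corr_avg f psi)
  (i j : 'I_r.-1) (hij : (i < j)%N) :
  (xi ^+ 8)%:C <= bias R (psi_swap psi i j).
Proof.
have ij : i != j by rewrite neq_ltn hij.
have h2 := main_ineq hp hf hpsi ij hxi hcorr.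
have b1 := bias_norm R psi i j.
have b0 : 0 < bias R (psi_swap psi i j).
  by apply: lt_le_trans h2; rewrite ltcR exprn_gt0.
have bl1 : bias R (psi_swap psi i j) <= 1 by rewrite -(gtr0_norm b0).
have xx : xi ^+ 2 <= 1.
  by rewrite -lecR; apply: le_trans h2 bl1.
have x1 : xi <= 1 by rewrite -(expr_le1 (n:=2)) // ltW.
have x8 : xi ^+ 8 <= xi ^+ 2.
  rewrite (_ : 8 = 2 + 6)%N // exprD; apply: ler_piMr; first exact: exprn_ge0 (ltW hxi).
  exact: exprn_ile1 (ltW hxi) x1.
by apply: le_trans h2; rewrite lecR.
Qed.
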